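(* Let $N\ge1$. Disregarding height assignments, any two $N$-cube Adinkras are isomorphic; i.e. there is a bijection between their vertex sets preserving adjacency, edge colors and the boson/fermion bipartition which, after switching a suitable set of vertices, also preserves edge parities.
   Context: An Adinkra of dimension $N$ is a finite connected simple graph $G=(V,E)$ together with: (1) a bipartition of $V$ into bosons and fermions such that every edge joins a boson and a fermion; (2) a height function $\mathrm{hgt}:V\to\mathbb{Z}$ with $|\mathrm{hgt}(u)-\mathrm{hgt}(v)|=1$ for every edge $uv$; (3) a coloring of $E$ by colors $\{1,\dots,N\}$ such that each vertex is incident to exactly one edge of each color; (4) an edge parity $\pi:E\to\mathbb{Z}_2$ (edges of parity $1$ are called dashed). These must satisfy: every path with edge colors $(i,j)$, $i\neq j$, lies in a unique 4-cycle with colors $(i,j,i,j)$, and every such two-colored 4-cycle has an odd number of dashed edges. An $N$-cube Adinkra is an Adinkra of dimension $N$ with $2^N$ vertices (its underlying graph is the $N$-dimensional hypercube). Switching a vertex reverses the parity of all edges incident to it. *)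

(* Defs.v *)
From mathcomp Require Import all_boot all_order all_algebra.
Set Implicit Arguments.
Unset Strict Implicit.
Unset Printing Implicit Defensive.

(* Colours {1,...,N} are represented by 'I_N.
   Edge data (colour, parity) are given as functions on ordered pairs of
   vertices, required to be symmetric on edges; their values on non-edges are
   irrelevant. *)
Record adinkra_data (N : nat) (V : finType) := AdinkraData {
  adj : rel V;
  boson : pred V;           (* bosons; fermions are the complement *)
  hgt : V -> int;
  col : V -> V -> 'I_N;
  dashed : V -> V -> bool   (* parity of the edge uv (true = dashed = 1) *)
}.

Definition is_adinkra (N : nat) (V : finType) (A : adinkra_data N V) : Prop :=
  let adj := adj A in let col := col A in let dashed := dashed A in
  [/\
      (forall u, ~~ adj u u),
      (forall u v, adj u v = adj v u),
      (forall u v, fingraph.connect adj u v)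
    &
      (forall u v, adj u v -> col u v = col v u /\ dashed u v = dashed v u)] /\
  [/\
      (forall u v, adj u v -> boson A u != boson A v),
      (forall u v, adj u v -> absz (hgt A u - hgt A v)%R = 1%N),
      (forall (v : V) (i : 'I_N), #|[set u | adj v u && (col v u == i)]| = 1%N),
      (forall u v w, adj u v -> adj v w -> col u v != col v w ->
         exists! x, [/\ adj w x, col w x = col u v, adj x u & col x u = col v w])
    &
      (forall u v w x, adj u v -> adj v w -> adj w x -> adj x u ->
         col u v != col v w -> col w x = col u v -> col x u = col v w ->
         dashed u v (+) dashed v w (+) dashed w x (+) dashed x u)].

Definition is_cube_adinkra (N : nat) (V : finType) (A : adinkra_data N V) : Prop :=
  is_adinkra A /\ #|V| = (2 ^ N)%N.

(* Parity of the edge uv after switching every vertex of S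
   (each switched endpoint reverses the parity). *)
Definition switched_dashed (N : nat) (V : finType) (A : adinkra_data N V)
  (S : {set V}) (u v : V) : bool :=
  dashed A u v (+) (u \in S) (+) (v \in S).

Definition adinkra_iso_up_to_switching (N : nat) (V1 V2 : finType)
  (A1 : adinkra_data N V1) (A2 : adinkra_data N V2) : Prop :=
  exists f : V1 -> V2,
  [/\ bijective f,
      (forall u v, adj A2 (f u) (f v) = adj A1 u v),
      (forall u v, adj A1 u v -> col A2 (f u) (f v) = col A1 u v),
      (forall u, boson A2 (f u) = boson A1 u)
    & exists S : {set V1},
        forall u v, adj A1 u v ->
          dashed A2 (f u) (f v) = switched_dashed A1 S u v].

(* Main.v *)
Require Import Defs.
From mathcomp Require Import all_boot all_order all_algebra.
Set Implicit Arguments.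
Unset Strict Implicit.
Unset Printing Implicit Defensive.

Definition toggle (N : nat) (s : {set 'I_N}) (i : 'I_N) : {set 'I_N} :=
  if i \in s then s :\ i else i |: s.

Lemma in_toggle N (s : {set 'I_N}) i j : (j \in toggle s i) = (j == i) (+) (j \in s).
Proof.
rewrite /toggle; case: ifP => Hi; rewrite !inE; case: eqP => [->|] //=; by rewrite Hi.
Qed.

Lemma toggleK N (s : {set 'I_N}) i : toggle (toggle s i) i = s.
Proof. by apply/setP => j; rewrite !in_toggle addbA addbb. Qed.

Lemma toggleC N (s : {set 'I_N}) i k : toggle (toggle s i) k = toggle (toggle s k) i.
Proof. apply/setP => j; rewrite !in_toggle; by case: (j == i); case: (j == k). Qed.

Lemma toggleU N (s : {set 'I_N}) i : i \notin s -> toggle s i = i |: s.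
Proof. by rewrite /toggle => /negbTE ->. Qed.

Lemma set_ind N (P : {set 'I_N} -> Prop) :
  P set0 -> (forall s i, P s -> P (toggle s i)) -> forall s, P s.
Proof.
move=> P0 PS s; move: {2}#|s|.+1 (ltnSn #|s|) => n; elim: n s => // n IH s Hs.
case: (set_0Vmem s) => [->//|[i si]].
have -> : s = toggle (s :\ i) i by rewrite toggleU ?setD1K // !inE eqxx.
apply: PS; apply: IH; move: Hs; rewrite (cardsD1 i s) si //.
Qed.

Section Cube.
Variables (N : nat) (V : finType) (A : adinkra_data N V).
Hypothesis HA : is_cube_adinkra A.

Local Notation adj := (adj A).
Local Notation col := (Defs.col A).

Lemma irrA u : ~~ adj u u. Proof. by case: HA => [[[]]]. Qed.
Lemma adjC u v : adj u v = adj v u. Proof. by case: HA => [[[]]]. Qed.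
Lemma connA u v : fingraph.connect adj u v. Proof. by case: HA => [[[]]]. Qed.
Lemma colC u v : adj u v -> col u v = col v u.
Proof. by case: HA => [[[_ _ _ H]] _] _ /H []. Qed.
Lemma dashC u v : adj u v -> dashed A u v = dashed A v u.
Proof. by case: HA => [[[_ _ _ H]] _] _ /H []. Qed.
Lemma bosA u v : adj u v -> boson A u != boson A v.
Proof. by case: HA => [[_ [H _ _ _ _]] _]; apply: H. Qed.
Lemma card1A v i : #|[set u | adj v u && (col v u == i)]| = 1%N.
Proof. by case: HA => [[_ [_ _ H _ _]] _]; apply: H. Qed.
Lemma sqA u v w : adj u v -> adj v w -> col u v != col v w ->
         exists! x, [/\ adj w x, col w x = col u v, adj x u & col x u = col v w].
Proof. by case: HA => [[_ [_ _ _ H _]] _]; apply: H. Qed.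
Lemma oddA u v w x : adj u v -> adj v w -> adj w x -> adj x u ->
         col u v != col v w -> col w x = col u v -> col x u = col v w ->
         dashed A u v (+) dashed A v w (+) dashed A w x (+) dashed A x u.
Proof. by case: HA => [[_ [_ _ _ _ H]] _]; apply: H. Qed.
Lemma cardV : #|V| = (2 ^ N)%N. Proof. by case: HA. Qed.

Definition nb v i := odflt v [pick u | adj v u && (col v u == i)].

Lemma nbP v i : adj v (nb v i) /\ col v (nb v i) = i.
Proof.
rewrite /nb; case: pickP => [u /andP [H1 /eqP H2] //|H].
have := card1A v i; rewrite (eq_card0 (A := [set u | _])) // => u; rewrite inE H.
by [].
Qed.

Lemma nb_uniq v u i : adj v u -> col v u = i -> u = nb v i.
Proof.
move=> H1 H2; have /cards1P [x Hx] : #|[set u | adj v u && (col v u == i)]| == 1%N by rewrite card1A.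
have : u \in [set u | adj v u && (col v u == i)] by rewrite inE H1 H2 eqxx.
have : nb v i \in [set u | adj v u && (col v u == i)].
  by case: (nbP v i) => H3 H4; rewrite inE H3 H4 eqxx.
by rewrite Hx !inE => /eqP -> /eqP ->.
Qed.

Lemma nbK v i : nb (nb v i) i = v.
Proof.
case: (nbP v i) => H1 H2; symmetry; apply: nb_uniq; first by rewrite adjC.
by rewrite -colC.
Qed.

Lemma nbC v i j : nb (nb v i) j = nb (nb v j) i.
Proof.
case: (eqVneq i j) => [->//|ij].
case: (nbP v i) => H1 H2; case: (nbP v j) => H3 H4.
have Hu : adj (nb v i) v by rewrite adjC.
have Hc : col (nb v i) v != col v (nb v j) by rewrite (colC Hu) H2 H4.
case: (sqA Hu H3 Hc) => x [[Hx1 Hx2 Hx3 Hx4] _].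
rewrite (colC Hu) H2 in Hx2; rewrite H4 in Hx4.
rewrite -(nb_uniq Hx1 Hx2); apply/esym/nb_uniq; first by rewrite adjC.
by rewrite colC // adjC.
Qed.

Lemma adj_nb v u : adj v u = [exists i, u == nb v i].
Proof.
apply/idP/existsP => [H|[i /eqP ->]]; last by case: (nbP v i).
by exists (col v u); rewrite -(nb_uniq H erefl).
Qed.

Definition F (s : {set 'I_N}) l v :=
  foldr (fun j w => if j \in s then nb w j else w) v l.

Lemma F_nb s l v i : F s l (nb v i) = nb (F s l v) i.
Proof. elim: l => //= j l IH; case: ifP => // _; by rewrite IH nbC. Qed.

Lemma F_toggle s l v i : uniq l ->
  F (toggle s i) l v = if i \in l then nb (F s l v) i else F s l v.
Proof.
elim: l => //= j l IH /andP [jl ul]; rewrite IH // in_toggle in_cons.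
case: (eqVneq j i) => [eji|nji] /=.
  subst j; rewrite (negbTE jl); case: (i \in s) => //=; by rewrite nbK.
idtac.
by case: (i \in l); case: (j \in s) => //; rewrite nbC.
Qed.

Definition act s v := F s (enum 'I_N) v.

Lemma act_toggle s i v : act (toggle s i) v = nb (act s v) i.
Proof. by rewrite /act F_toggle ?enum_uniq // mem_enum. Qed.


Variable v0 : V.
Definition phi s := act s v0.

Lemma phi_toggle s i : phi (toggle s i) = nb (phi s) i.
Proof. exact: act_toggle. Qed.

Lemma phi0 : phi set0 = v0.
Proof. rewrite /phi /act; by elim: (enum 'I_N) => //= j l ->; rewrite inE. Qed.

Lemma phi_surj u : exists s, phi s = u.
Proof.
have /connectP [p Hp ->] := connA v0 u.
suff H : forall p x s, path adj x p -> phi s = x -> exists t, phi t = last x p.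
  apply: (H p v0 set0 Hp); rewrite /phi /act.
  by elim: (enum 'I_N) => //= j l ->; rewrite inE.
elim=> [|y p' IH] x s /=; first by move=> _ <-; exists s.
case/andP => Hxy Hp' Hs; apply: (IH y (toggle s (col x y)) Hp').
by rewrite phi_toggle Hs -(nb_uniq Hxy erefl).
Qed.

Lemma card_sets : #|{set 'I_N}| = (2 ^ N)%N.
Proof. by rewrite -cardsT -powersetT card_powerset cardsT card_ord. Qed.

Lemma phi_inj : injective phi.
Proof.
have : #|[seq phi x | x in {set 'I_N}]| == #|{set 'I_N}|.
  rewrite card_sets -cardV; apply/eqP/eq_card => u.
  have [s <-] := phi_surj u; by rewrite map_f ?mem_enum.
by move/image_injP => H x y; apply: H.
Qed.

Lemma phi_bij : bijective phi.
Proof. by apply: inj_card_bij phi_inj _; rewrite card_sets cardV. Qed.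

Lemma adj_phi s t : adj (phi s) (phi t) = [exists i, t == toggle s i].
Proof.
rewrite adj_nb; apply/existsP/existsP => [] [i Hi]; exists i.
  by rewrite -phi_toggle in Hi; rewrite (inj_eq phi_inj) in Hi.
by rewrite -phi_toggle (inj_eq phi_inj).
Qed.

Lemma adj_phi_t s i : adj (phi s) (phi (toggle s i)).
Proof. by rewrite adj_phi; apply/existsP; exists i. Qed.

Lemma col_phi s i : col (phi s) (phi (toggle s i)) = i.
Proof. by rewrite phi_toggle; case: (nbP (phi s) i). Qed.

Lemma bos_phi s i : boson A (phi (toggle s i)) = ~~ boson A (phi s).
Proof.
have := bosA (adj_phi_t s i).
by case: (boson A (phi s)); case: (boson A (phi (toggle s i))).
Qed.

Lemma dash_phi s i : dashed A (phi (toggle s i)) (phi (toggle (toggle s i) i)) =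
   dashed A (phi s) (phi (toggle s i)).
Proof. by rewrite toggleK -dashC // adj_phi_t. Qed.

Lemma sq_phi a i k : i != k ->
  dashed A (phi a) (phi (toggle a i)) (+)
  dashed A (phi (toggle a i)) (phi (toggle (toggle a i) k)) (+)
  dashed A (phi (toggle (toggle a i) k)) (phi (toggle a k)) (+)
  dashed A (phi (toggle a k)) (phi a).
Proof.
move=> ik.
have E1 : toggle a k = toggle (toggle (toggle a i) k) i by rewrite toggleC toggleK.
have E2 : a = toggle (toggle a k) k by rewrite toggleK.
have H1 := adj_phi_t a i.
have H2 := adj_phi_t (toggle a i) k.
have H3 := adj_phi_t (toggle (toggle a i) k) i.
have H4 := adj_phi_t (toggle a k) k.
have C1 := col_phi a i.
have C2 := col_phi (toggle a i) k.
have C3 := col_phi (toggle (toggle a i) k) i.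
have C4 := col_phi (toggle a k) k.
rewrite -E1 in H3 C3; rewrite -E2 in H4 C4.
apply: oddA => //; by rewrite ?C1 ?C2 ?C3 ?C4.
Qed.

End Cube.
Section Two.
Variables (N : nat) (V1 V2 : finType) (A1 : adinkra_data N V1) (A2 : adinkra_data N V2).
Hypotheses (H1 : is_cube_adinkra A1) (H2 : is_cube_adinkra A2).
Variables (v1 : V1) (v2 : V2).

Local Notation phi1 := (phi A1 v1).
Local Notation phi2 := (phi A2 v2).

Definition e s i := dashed A1 (phi1 s) (phi1 (toggle s i)) (+)
                    dashed A2 (phi2 s) (phi2 (toggle s i)).

Lemma e_sym s i : e (toggle s i) i = e s i.
Proof. by rewrite /e !dash_phi. Qed.

Lemma e_sq a i k : i != k -> e a i (+) e (toggle a i) k (+) e (toggle a k) i (+) e a k = false.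
Proof.
move=> ik; have S1 := sq_phi H1 v1 a ik; have S2 := sq_phi H2 v2 a ik.
have D1 := dash_phi H1 v1 (toggle a k) i; have D2 := dash_phi H2 v2 (toggle a k) i.
have D3 := dash_phi H1 v1 a k; have D4 := dash_phi H2 v2 a k.
rewrite toggleK [toggle (toggle a k) i]toggleC in D1 D2.
rewrite toggleK in D3 D4.
rewrite /e [toggle (toggle a k) i]toggleC -D1 -D2 -D3 -D4.
move: S1 S2.
set x1 := dashed A1 _ _; set x2 := dashed A1 _ _; set x3 := dashed A1 _ _; set x4 := dashed A1 _ _.
set y1 := dashed A2 _ _; set y2 := dashed A2 _ _; set y3 := dashed A2 _ _; set y4 := dashed A2 _ _.
by case: x1; case: x2; case: x3; case: x4; case: y1; case: y2; case: y3; case: y4.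
Qed.


Definition g (s : {set 'I_N}) := \big[addb/false]_(k in s) e [set j in s | j < k] k.

Lemma gmax (s : {set 'I_N}) (m : 'I_N) : m \notin s -> (forall j, j \in s -> j < m) -> g (m |: s) = e s m (+) g s.
Proof.
move=> ms Hs; rewrite /g big_setU1 //=; congr addb.
  congr e; apply/setP => j; rewrite !inE; case: (eqVneq j m) => [->|_] /=.
    by rewrite ltnn (negbTE ms).
  by case js: (j \in s) => //=; rewrite Hs.
apply: eq_bigr => k ks; congr e; apply/setP => j; rewrite !inE.
case: (eqVneq j m) => [->|_] //=; have := Hs k ks.
by move=> km; rewrite (negbTE ms) ltnNge ltnW.
Qed.

Lemma gmain (s : {set 'I_N}) (i : 'I_N) : i \notin s -> g (i |: s) = g s (+) e s i.
Proof.
move: {2}#|s|.+1 (ltnSn #|s|) => n; elim: n s => // n IH s Hs nis.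
case: (boolP [forall k in s, k < i]) => [/forall_inP Hall|].
  by rewrite gmax // addbC.
rewrite negb_forall_in => /existsP [k /andP [ks]]; rewrite -leqNgt => ik.
have ki : k != i by apply: contraNneq nis => <-.
have {ik ki} ik : i < k by rewrite ltn_neqAle eq_sym ki ik.
case: (@arg_maxnP _ k (fun j => j \in s) val ks) => m ms Hm.
set s' := s :\ m.
have Es : s = m |: s' by rewrite setD1K.
have Hs' : forall j, j \in s' -> j < m.
  move=> j; rewrite !inE => /andP [jm js]; rewrite ltn_neqAle; apply/andP; split.
    by apply: contra jm => /eqP /val_inj ->.
  exact: (Hm j js).
have im : i < m by apply: leq_trans ik (Hm _ ks : k <= m).
have ms' : m \notin s' by rewrite !inE eqxx.
have nis' : i \notin s' by rewrite !inE negb_and nis orbT.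
have mi : m != i by rewrite neq_ltn im orbT.
have Ecard : #|s'| < n by move: Hs; rewrite (cardsD1 m s) ms.
have Eis : i |: s = m |: (i |: s') by rewrite Es setUCA.
rewrite Eis gmax; first last.
- by move=> j; rewrite in_setU1 => /orP [/eqP ->|js] //; apply: Hs'.
- by rewrite in_setU1 negb_or mi ms'.
rewrite IH // Es gmax //.
have Sq := e_sq s' (negbT (ltn_eqF im)).
rewrite toggleU // toggleU // in Sq.
move: Sq; set a := e s' i; set b := e (i |: s') m; set c := e (m |: s') i; set d := e s' m.
by case: a; case: b; case: c; case: d; case: (g s').
Qed.

Lemma gtoggle (s : {set 'I_N}) (i : 'I_N) : g (toggle s i) = g s (+) e s i.
Proof.
case: (boolP (i \in s)) => nis; last by rewrite toggleU // gmain.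
have Es : s = i |: (s :\ i) by rewrite setD1K.
have nis' : i \notin s :\ i by rewrite !inE eqxx.
have Et : toggle s i = s :\ i by rewrite /toggle nis.
rewrite Et {2 3}Es gmain // -toggleU // e_sym.
by rewrite -addbA addbb addbF.
Qed.


Lemma bos_phi12 : boson A2 v2 = boson A1 v1 ->
  forall s, boson A2 (phi2 s) = boson A1 (phi1 s).
Proof.
move=> hb; apply: set_ind; first by rewrite !phi0.
by move=> s i IH; rewrite (bos_phi H1) (bos_phi H2) IH.
Qed.

End Two.

Theorem mainTheorem2 (N : nat) (V1 V2 : finType)
  (A1 : adinkra_data N V1) (A2 : adinkra_data N V2) :
  (1 <= N)%N -> is_cube_adinkra A1 -> is_cube_adinkra A2 ->
  adinkra_iso_up_to_switching A1 A2.
Proof.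
move=> N1 H1 H2.
have ne (V : finType) (A : adinkra_data N V) : is_cube_adinkra A -> exists v : V, true.
  move=> HA; case: (pickP (@predT V)) => [v _|H0]; first by exists v.
  have := cardV HA; rewrite (eq_card0 H0) => /eqP; by rewrite eq_sym expn_eq0.
have [v1 _] := ne _ _ H1; have [w _] := ne _ _ H2.
pose i0 := Ordinal N1.
pose v2 := if boson A2 w == boson A1 v1 then w else nb A2 w i0.
have hb : boson A2 v2 = boson A1 v1.
  rewrite /v2; case: eqP => // /eqP Hw.
  case: (nbP H2 w i0) => Ha _; have := bosA H2 Ha; move: Hw.
  by case: (boson A2 w); case: (boson A1 v1); case: (boson A2 (nb A2 w i0)).
have [psi1 K1 K1'] := phi_bij H1 v1.
have [psi2 L1 L2] := phi_bij H2 v2.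
exists (phi A2 v2 \o psi1); split.
- by exists (phi A1 v1 \o psi2) => x /=; rewrite ?L1 ?K1' ?K1 ?L2.
- move=> u v; have [s ->] : exists s, u = phi A1 v1 s by exists (psi1 u).
  have [t ->] : exists t, v = phi A1 v1 t by exists (psi1 v).
  by rewrite /= !K1 (adj_phi H1) (adj_phi H2).
- move=> u v; have [s ->] : exists s, u = phi A1 v1 s by exists (psi1 u).
  have [t ->] : exists t, v = phi A1 v1 t by exists (psi1 v).
  rewrite (adj_phi H1) => /existsP [i /eqP ->].
  by rewrite /= !K1 (col_phi H1) (col_phi H2).
- move=> u; have [s ->] : exists s, u = phi A1 v1 s by exists (psi1 u).
  by rewrite /= K1 (bos_phi12 H1 H2 hb).
exists [set u | g A1 A2 v1 v2 (psi1 u)].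
move=> u v; have [s ->] : exists s, u = phi A1 v1 s by exists (psi1 u).
have [t ->] : exists t, v = phi A1 v1 t by exists (psi1 v).
rewrite (adj_phi H1) => /existsP [i /eqP ->].
rewrite /switched_dashed /= !inE !K1 (gtoggle H1 H2) /e.
set a := dashed A1 _ _; set b := dashed A2 _ _; set c := g _ _ _ _ _.
by case: a; case: b; case: c.
Qed.
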